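(* Let $n,r\ge 1$ be integers and $t_0\in\mathbb R$. Let $g:\mathbb R\times V\to\mathbb R^r$, $V\subseteq\mathbb R^r$ open, be continuous in $t$ and continuously differentiable in $z\in V$. For $i,j\in[n]$ let $w_{ij}(t,x)$ ($t\in\mathbb R$, $x\in\mathbb R^{nr}$) be continuous in $t$ and continuously differentiable in $x$, and suppose there are $\bar w<\infty$ and a non-negative, integrable, non-increasing function $\psi$ with $$\bar w\ \ge\ \sup_{t\ge t_0}\sup_x\max_{i\ne j}w_{ij}(t,x)\ \ge\ \inf_t w_{ij}(t,x)\ \ge\ \psi(S(x)).$$ Let $(x(t),v(t))$, $t\in[t_0,T)$, be the maximal solution of $$\dot x_i=v_i,\qquad \dot v_i=g(t,v_i)+\sum_{j=1}^n w_{ij}(t,x)(v_j-v_i),\quad t\ge t_0,\qquad x_i(t_0)=x_i^0,\ v_i(t_0)=v_i^0\in\mathbb R^r\ (i\in[n]),$$ and let $K=\sup_{t\in[t_0,T)}\max_{i,i'\in[n],l\in[r]}K(t,l,v_i(t),v_{i'}(t))$. Then for all $t\in[t_0,T)$, $$\frac{d}{dt}S(v(t))\le\big[K-n\psi(S(x(t)))\big]S(v(t)),$$ where $\frac{d}{dt}$ denotes the right-hand Dini derivative.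
   Context: $[k]=\{1,\dots,k\}$. For $y=(y_1,\dots,y_n)\in\mathbb R^{nr}$ with $y_i=(y_i^{(1)},\dots,y_i^{(r)})$, $S(y)=\max_{l\in[r]}\max_{i,j}|y_i^{(l)}-y_j^{(l)}|$. For $t\in\mathbb R$, $l\in[r]$, $y,w\in\mathbb R^r$, $$K(t,l,y,w)=\int_0^1\frac{\partial g^{(l)}}{\partial z^{(l)}}(t,qy+(1-q)w)\,dq+\sum_{h\ne l}\Big|\int_0^1\frac{\partial g^{(l)}}{\partial z^{(h)}}(t,qy+(1-q)w)\,dq\Big|.$$ *)

(* Defs.v *)
From HB Require Import structures.
From mathcomp Require Import all_boot all_order all_algebra.
From mathcomp Require Import all_classical all_reals all_analysis.
Set Implicit Arguments. Unset Strict Implicit. Unset Printing Implicit Defensive.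
Import Order.TTheory GRing.Theory Num.Theory.
Import numFieldNormedType.Exports.
Local Open Scope classical_set_scope.
Local Open Scope ring_scope.

Section Defs.
Variable R : realType.

(* A point y = (y_1,...,y_n) of R^{nr} is an n x r matrix; row i is y_i,
   entry (i,l) is y_i^{(l)}. *)

Definition Sdiam (n r : nat) (y : 'M[R]_(n, r)) : R :=
  \big[Num.max/0]_(l < r) \big[Num.max/0]_(i < n) \big[Num.max/0]_(j < n)
     `|y i l - y j l|.

Definition pderiv_g (r : nat) (g : R -> 'rV[R]_r -> 'rV[R]_r)
    (l h : 'I_r) (t : R) (z : 'rV[R]_r) : R :=
  ('D_(delta_mx 0 h) (g t) z) 0 l.

Definition Kfun (r : nat) (g : R -> 'rV[R]_r -> 'rV[R]_r)
    (t : R) (l : 'I_r) (y w : 'rV[R]_r) : R :=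
  Rintegral lebesgue_measure `[0, 1]
      (fun q => pderiv_g g l l t (q *: y + (1 - q) *: w))
  + \sum_(h < r | h != l)
      `| Rintegral lebesgue_measure `[0, 1]
           (fun q => pderiv_g g l h t (q *: y + (1 - q) *: w)) |.

Definition rhs_v (n r : nat) (g : R -> 'rV[R]_r -> 'rV[R]_r)
    (w : 'I_n -> 'I_n -> R -> 'M[R]_(n, r) -> R)
    (t : R) (x v : 'M[R]_(n, r)) : 'M[R]_(n, r) :=
  \matrix_(i, l) ((g t (row i v)) 0 l + \sum_(j < n) w i j t x * (v j l - v i l)).

(* (x, v) solves the system on [t0, T) (T may be +oo): initial conditions,
   v_i(t) stays in the domain V of g, derivatives in the interior and
   right derivatives at every point (in particular at t0). *)
Definition is_solution (n r : nat) (V : set 'rV[R]_r)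
    (g : R -> 'rV[R]_r -> 'rV[R]_r)
    (w : 'I_n -> 'I_n -> R -> 'M[R]_(n, r) -> R)
    (t0 : R) (x0 v0 : 'M[R]_(n, r)) (T : \bar R)
    (x v : R -> 'M[R]_(n, r)) : Prop :=
  [/\ x t0 = x0, v t0 = v0,
      (forall t, t0 <= t -> (t%:E < T)%E -> forall i, V (row i (v t))),
      (forall t, t0 < t -> (t%:E < T)%E ->
          is_derive t 1 x (v t) /\ is_derive t 1 v (rhs_v g w t (x t) (v t))) &
      (forall t, t0 <= t -> (t%:E < T)%E ->
          (fun h : R => h^-1 *: (x (t + h) - x t)) @ 0^'+ --> v t /\
          (fun h : R => h^-1 *: (v (t + h) - v t)) @ 0^'+
              --> rhs_v g w t (x t) (v t))].

Definition is_maximal_solution (n r : nat) (V : set 'rV[R]_r)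
    (g : R -> 'rV[R]_r -> 'rV[R]_r)
    (w : 'I_n -> 'I_n -> R -> 'M[R]_(n, r) -> R)
    (t0 : R) (x0 v0 : 'M[R]_(n, r)) (T : \bar R)
    (x v : R -> 'M[R]_(n, r)) : Prop :=
  [/\ (t0%:E < T)%E, is_solution V g w t0 x0 v0 T x v &
      ~ (exists (T' : \bar R) (x' v' : R -> 'M[R]_(n, r)),
            (T < T')%E /\ is_solution V g w t0 x0 v0 T' x' v')].

Definition dini_ur (f : R -> R) (t : R) : \bar R :=
  limf_esup (fun h : R => ((f (t + h) - f t) / h)%:E) (0^'+).

End Defs.

(* Main.v *)
Require Import Defs.
From HB Require Import structures.
From mathcomp Require Import all_boot all_order all_algebra.
From mathcomp Require Import all_classical all_reals all_analysis.
From mathcomp Require Import ring lra.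
Set Implicit Arguments. Unset Strict Implicit.
Import Order.TTheory GRing.Theory Num.Theory.
Import numFieldNormedType.Exports.
Local Open Scope classical_set_scope.
Local Open Scope ring_scope.

Section S.
Variable R : realType.

Lemma Sdiam_ge n r (y : 'M[R]_(n, r)) i j l : `|y i l - y j l| <= Sdiam y.
Proof.
rewrite /Sdiam.
apply: le_trans (le_bigmax _ _ l).
apply: le_trans (le_bigmax _ _ i).
exact: (le_bigmax _ _ j).
Qed.

Lemma Sdiam_ge0 n r (y : 'M[R]_(n, r)) : 0 <= Sdiam y.
Proof.
exact: bigmax_ge_id.
Qed.

Lemma Sdiam_le n r (y : 'M[R]_(n, r)) c : 0 <= c ->
  (forall i j l, `|y i l - y j l| <= c) -> Sdiam y <= c.
Proof.
move=> c0 H; rewrite /Sdiam.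
apply: bigmax_le => // l _; apply: bigmax_le => // i _; apply: bigmax_le => // j _.
Qed.

Lemma mx_entry_le m n (A : 'M[R]_(m, n)) i j : `|A i j| <= `|A|.
Proof.
rewrite [leRHS]/Num.Def.normr/= mx_normrE.
exact: (le_bigmax _ _ (i, j)).
Qed.



Lemma dini_bound n r (v : R -> 'M[R]_(n, r)) t (D : 'M[R]_(n, r)) (B : R) :
  (0 < n)%N -> (0 < r)%N ->
  (fun h : R => h^-1 *: (v (t + h) - v t)) @ 0^'+ --> D ->
  (forall l i j, v t i l - v t j l = Sdiam (v t) -> D i l - D j l <= B) ->
  (dini_ur (fun s => Sdiam (v s)) t <= B%:E)%E.
Proof.
move=> hn hr hD hB.
set M := Sdiam (v t).
set Q := (fun h : R => h^-1 *: (v (t + h) - v t)).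
apply/lee_addgt0Pr => e e0.
have key : forall i j l, \forall h \near 0^'+,
    v (t + h) i l - v (t + h) j l <= M + h * (B + e).
  move=> i j l.
  set Da := D i l - D j l.
  set f0 := v t i l - v t j l.
  have f0M : f0 <= M by exact: le_trans (ler_norm _) (Sdiam_ge (v t) i j l).
  have e2 : 0 < e / 2 by rewrite divr_gt0.
  move/cvgrPdist_le : hD => /(_ _ e2) hQ.
  have pos : 0 < `|Da - B| + 1 by have := normr_ge0 (Da - B); lra.
  set del := (M - f0) / (`|Da - B| + 1).
  have del0 : 0 <= del by rewrite divr_ge0 // ?subr_ge0 // addr_ge0.
  have common : \forall h \near 0^'+, 0 < h /\
      v (t + h) i l - v (t + h) j l <= f0 + h * (Da + e).
    near=> h.
    have h0 : 0 < h by near: h; exact: nbhs_right_gt.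
    have hQh : `|D - Q h| <= e / 2 by near: h; exact: hQ.
    have qb : Q h i l - Q h j l <= Da + e.
      have := le_trans (mx_entry_le (D - Q h) i l) hQh.
      have := le_trans (mx_entry_le (D - Q h) j l) hQh.
      rewrite !mxE => /ler_normlP [h1 h2] /ler_normlP [h3 h4].
      rewrite /Da; lra.
    have -> : v (t + h) i l - v (t + h) j l = f0 + h * (Q h i l - Q h j l).
      rewrite /f0 /Q !mxE; field; exact: lt0r_neq0.
    have hq : h * (Q h i l - Q h j l) <= h * (Da + e) by rewrite ler_pM2l.
    split => //; lra.
  case: (eqVneq f0 M) => [f0E|f0nM].
    have := hB l i j f0E; rewrite -/Da => DaB.
    near=> h.
    have [h0 hb] : 0 < h /\ v (t + h) i l - v (t + h) j l <= f0 + h * (Da + e).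
      by near: h; exact: common.
    have : h * (Da + e) <= h * (B + e) by rewrite ler_pM2l // lerD2r.
    rewrite -f0E; lra.
  have f0lt : f0 < M by rewrite lt_neqAle f0nM.
  have del0' : 0 < del by rewrite divr_gt0 // subr_gt0.
  near=> h.
  have [h0 hb] : 0 < h /\ v (t + h) i l - v (t + h) j l <= f0 + h * (Da + e).
    by near: h; exact: common.
  have hdel : h < del by near: h; exact: nbhs_right_lt.
  have : h * (Da - B) <= M - f0.
    apply: le_trans (_ : h * (`|Da - B| + 1) <= M - f0).
      rewrite ler_pM2l //; have := ler_norm (Da - B); lra.
    rewrite -(ler_pM2r (_ : 0 < (`|Da - B| + 1)^-1)); last by rewrite invr_gt0.
    rewrite -mulrA mulfV ?mulr1; last exact: lt0r_neq0.
    exact: ltW.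
  lra.
have all : \forall h \near 0^'+, 0 < h /\ Sdiam (v (t + h)) <= M + h * (B + e).
  have k3 : \forall h \near 0^'+, forall i j l,
      v (t + h) i l - v (t + h) j l <= M + h * (B + e).
    apply: filter_forall => i; apply: filter_forall => j; apply: filter_forall => l.
    exact: key.
  near=> h; split; first by near: h; exact: nbhs_right_gt.
  have K3 : forall i j l, v (t + h) i l - v (t + h) j l <= M + h * (B + e).
    by near: h; exact: k3.
  have c0 : 0 <= M + h * (B + e).
    have := K3 (Ordinal hn) (Ordinal hn) (Ordinal hr); rewrite subrr; exact.
  apply: Sdiam_le => // i j l; apply/ler_normlP; split.
    by have := K3 j i l; lra.
  exact: K3.
rewrite /dini_ur limf_esupE.
set A := [set h | 0 < h /\ Sdiam (v (t + h)) <= M + h * (B + e)].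
apply: le_trans (ereal_inf_lbound _) _.
  by exists A.
apply/ereal_supP => y [h [h0 hb] <-].
rewrite -EFinD lee_fin -/M ler_pdivrMr // mulrC; lra.
Unshelve. all: by end_near.
Qed.

End S.

Section S.
Variable R : realType.

Lemma MVT0 (f df : R -> R) (b : R) :
  (forall x : R, `|x| <= `|b| -> is_derive x 1 f (df x)) ->
  exists c, `|c| <= `|b| /\ f b - f 0 = df c * b.
Proof.
move=> H.
have dH : forall x : R, `|x| <= `|b| -> derivable f x 1.
  by move=> x /H [].
case: (lerP 0 b) => b0.
  have h1 : forall x, x \in `]0, b[ -> is_derive x 1 f (df x).
    move=> x; rewrite in_itv /= => /andP [x0 xb]; apply: H.
    by rewrite !ger0_norm // ?ltW.
  have h2 : {within `[0, b], continuous f}.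
    apply: derivable_within_continuous => x; rewrite in_itv /= => /andP [x0 xb].
    by apply: dH; rewrite !ger0_norm.
  have [c c0b E] := @MVT_segment R f df 0 b b0 h1 h2.
  exists c; split; last by rewrite E subr0.
  by move: c0b; rewrite in_itv /= => /andP [c0 cb]; rewrite !ger0_norm.
have h1 : forall x, x \in `]b, 0[ -> is_derive x 1 f (df x).
  move=> x; rewrite in_itv /= => /andP [x0 xb]; apply: H.
  by rewrite !ltr0_norm // lerN2 ltW.
have h2 : {within `[b, 0], continuous f}.
  apply: derivable_within_continuous => x; rewrite in_itv /= => /andP [x0 xb].
  by apply: dH; rewrite ler0_norm // ltr0_norm // lerN2.
have [c c0b E] := @MVT_segment R f df b 0 (ltW b0) h1 h2.
exists c; split.
  by move: c0b; rewrite in_itv /= => /andP [c0 cb]; rewrite ler0_norm // ltr0_norm // lerN2.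
move: E; rewrite sub0r mulrN => E; by apply: oppr_inj; rewrite opprB E.
Qed.

Lemma line_is_derive r (G : 'rV[R]_r -> 'rV[R]_r) (p e : 'rV[R]_r) l tau :
  derivable G (p + tau *: e) e ->
  is_derive tau 1 (fun s => G (p + s *: e) 0 l) (('D_e G (p + tau *: e)) 0 l).
Proof.
move=> dG.
have dF : derivable (fun x => G x 0 l) (p + tau *: e) e by move/derivable_mxP : dG; apply.
rewrite derive_mx // mxE.
have E : (fun h : R => h^-1 *: (((fun s => G (p + s *: e) 0 l) \o shift tau) (h *: 1)
            - G (p + tau *: e) 0 l)) =
         (fun h : R => h^-1 *: (((fun x => G x 0 l) \o shift (p + tau *: e)) (h *: e)
            - G (p + tau *: e) 0 l)).
  apply/funext => h /=; congr (_ *: (_ - _)); congr (G _ 0 l).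
  by rewrite /shift /= scaler1 scalerDl addrCA addrA.
apply: DeriveDef.
  by rewrite /derivable E.
by rewrite /derive E.
Qed.

Lemma mx_norm_le m n (A : 'M[R]_(m, n)) c : 0 <= c ->
  (forall i j, `|A i j| <= c) -> `|A| <= c.
Proof.
move=> c0 H; rewrite [leLHS]/Num.Def.normr/= mx_normrE.
by apply: bigmax_le => // -[i j] _; exact: H.
Qed.



Definition cpref r (d : 'rV[R]_r) (k : nat) : 'rV[R]_r :=
  \row_(j < r) (if (j < k)%N then d 0 j else 0).

Lemma cpref0 r (d : 'rV[R]_r) : cpref d 0 = 0.
Proof. by apply/matrixP => i j; rewrite !mxE. Qed.

Lemma cprefr r (d : 'rV[R]_r) : cpref d r = d.
Proof. by apply/matrixP => i j; rewrite !mxE ltn_ord ord1. Qed.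

Lemma cprefS r (d : 'rV[R]_r) (k : 'I_r) :
  cpref d k.+1 = cpref d k + d 0 k *: delta_mx 0 k.
Proof.
apply/matrixP => i j; rewrite !mxE ord1 eqxx /=.
case: (ltngtP j k) => [jk|kj|/val_inj ->].
- by rewrite ltnS ltnW // (_ : (j == k) = false) ?mulr0 ?addr0 //; apply/negbTE; rewrite neq_ltn jk.
- have -> : (j < k.+1)%N = false by apply/negbTE; rewrite -leqNgt.
  by rewrite (_ : (j == k) = false) ?mulr0 ?addr0 //; apply/negbTE; rewrite neq_ltn kj orbT.
- by rewrite ltnS leqnn eqxx mulr1 add0r.
Qed.


Lemma cpref_small r (d : 'rV[R]_r) (k : 'I_r) (u xi : R) :
  `|xi| <= `|u * d 0 k| ->
  `|u *: cpref d k + xi *: delta_mx 0 k| <= `|u| * `|d|.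
Proof.
move=> hxi.
have ge0 : 0 <= `|u| * `|d| by rewrite mulr_ge0.
apply: mx_norm_le => // i j; rewrite !mxE ord1 eqxx /=.
have dj : `|u| * `|d 0 j| <= `|u| * `|d| by rewrite ler_wpM2l // mx_entry_le.
case: (ltngtP j k) => [jk|kj|/val_inj ->].
- rewrite (_ : (j == k) = false) ?mulr0 ?addr0; first by rewrite normrM.
  by apply/negbTE/negP => /eqP jk'; move: jk; rewrite jk' ltnn.
- rewrite (_ : (j == k) = false) ?mulr0 ?addr0 ?normr0 //.
  by apply/negbTE/negP => /eqP jk'; move: kj; rewrite jk' ltnn.
- rewrite eqxx mulr1 mulr0 add0r; apply: (le_trans hxi); rewrite normrM; by rewrite ler_wpM2l // mx_entry_le.
Qed.

Lemma line_cvg r (G : 'rV[R]_r -> 'rV[R]_r) (U : set 'rV[R]_r) (l : 'I_r)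
    (z d : 'rV[R]_r) :
  open U -> U z ->
  (forall x (h : 'I_r), U x -> derivable G x (delta_mx 0 h)) ->
  (forall h : 'I_r, {for z, continuous (fun x => ('D_(delta_mx 0 h) G x) 0 l)}) ->
  (fun u : R => u^-1 * (G (z + u *: d) 0 l - G z 0 l)) @ 0^' -->
     \sum_(h < r) d 0 h * ('D_(delta_mx 0 h) G z) 0 l.
Proof.
move=> hU Uz dG cP.
set P := fun (h : 'I_r) x => ('D_(delta_mx 0 h) G x) 0 l.
set F := fun x => G x 0 l.
apply/cvgrPdist_le => e e0.
set S := \sum_(h < r) `|d 0 h|.
have S0 : 0 <= S by apply: sumr_ge0 => *; exact: normr_ge0.
set e' := e / (S + 1).
have S1 : 0 < S + 1 by lra.
have e'0 : 0 < e' by rewrite divr_gt0.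
have nz1 : \forall x \near z, forall h, `|P h z - P h x| <= e'.
  have H : forall h : 'I_r, \forall x \near z, `|P h z - P h x| <= e'.
    by move=> h; move/cvgrPdist_le : (cP h) => /(_ _ e'0).
  exact: filter_forall H.
have nz2 : \forall x \near z, U x by exact: open_nbhs_nbhs.
have nz : \forall x \near z, U x /\ forall h, `|P h z - P h x| <= e'.
  by near=> x; split; [near: x; exact: nz2 | near: x; exact: nz1].
move/nbhs_normP : nz => [del del0 hdel].
set N := `|d| + 1.
have N0 : 0 < N by rewrite /N; have := normr_ge0 d; lra.
have delN : 0 < del / N by rewrite divr_gt0.
near=> u.
have u0 : u != 0 by near: u; exact: nbhs_dnbhs_neq.
have ud : `|u| < del / N by near: u; exact: dnbhs0_lt.
have inball : forall (k : 'I_r) xi, `|xi| <= `|u * d 0 k| ->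
    U (z + u *: cpref d k + xi *: delta_mx 0 k) /\
    forall h, `|P h z - P h (z + u *: cpref d k + xi *: delta_mx 0 k)| <= e'.
  move=> k xi hxi; apply: hdel; rewrite /ball_ /=.
  rewrite -addrA opprD addrA subrr add0r normrN.
  apply: le_lt_trans (cpref_small hxi) _.
  have : `|u| * N < del by rewrite -ltr_pdivlMr.
  rewrite /N; have := normr_ge0 u; nra.
have perk : forall k : 'I_r,
    `|d 0 k * P k z - u^-1 * (F (z + u *: cpref d k.+1) - F (z + u *: cpref d k))|
      <= `|d 0 k| * e'.
  move=> k.
  set p := z + u *: cpref d k.
  have hyp : forall s : R, `|s| <= `|u * d 0 k| ->
      is_derive s 1 (fun s => F (p + s *: delta_mx 0 k)) (P k (p + s *: delta_mx 0 k)).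
    move=> s hs; apply: line_is_derive.
    exact: dG (inball k s hs).1.
  have [c [hc E]] := MVT0 hyp.
  rewrite cprefS scalerDr addrA scalerA.
  have -> : F p = F (p + 0 *: delta_mx 0 k) by rewrite scale0r addr0.
  rewrite -/p E.
  have -> : u^-1 * (P k (p + c *: delta_mx 0 k) * (u * d 0 k)) =
            d 0 k * P k (p + c *: delta_mx 0 k) by field.
  rewrite -mulrBr normrM ler_wpM2l //.
  exact: (inball k c hc).2.
have tel : G (z + u *: d) 0 l - G z 0 l =
    \sum_(k < r) (F (z + u *: cpref d k.+1) - F (z + u *: cpref d k)).
  rewrite -(big_mkord xpredT (fun k => F (z + u *: cpref d k.+1) - F (z + u *: cpref d k))).
  by rewrite telescope_sumr // cprefr cpref0 scaler0 addr0.
rewrite tel mulr_sumr -sumrB.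
apply: le_trans (ler_norm_sum _ _ _) _.
apply: le_trans (ler_sum _ (fun k _ => perk k)) _.
rewrite -mulr_suml -/S /e' mulrA ler_pdivrMr //.
nra.
Unshelve. all: by end_near.
Qed.

Lemma line_is_derive2 r (G : 'rV[R]_r -> 'rV[R]_r) (U : set 'rV[R]_r) (l : 'I_r)
    (z d : 'rV[R]_r) (s0 : R) :
  open U -> U (z + s0 *: d) ->
  (forall x (h : 'I_r), U x -> derivable G x (delta_mx 0 h)) ->
  (forall x (h : 'I_r), U x -> {for x, continuous (fun x => ('D_(delta_mx 0 h) G x) 0 l)}) ->
  is_derive s0 1 (fun s => G (z + s *: d) 0 l)
     (\sum_(h < r) d 0 h * ('D_(delta_mx 0 h) G (z + s0 *: d)) 0 l).
Proof.
move=> hU Uz dG cP.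
have C := @line_cvg r G U l (z + s0 *: d) d hU Uz dG (fun h => cP _ h Uz).
have E : (fun h : R => h^-1 *: (((fun s => G (z + s *: d) 0 l) \o shift s0) (h *: 1)
            - G (z + s0 *: d) 0 l)) =
         (fun u : R => u^-1 * (G ((z + s0 *: d) + u *: d) 0 l - G (z + s0 *: d) 0 l)).
  apply/funext => h /=; rewrite /shift /= scaler1 scalerDl addrA.
  by rewrite [z + h *: d + _]addrAC.
apply: DeriveDef.
  by rewrite /derivable E; apply/cvg_ex; eexists; exact: C.
by rewrite /derive E; exact: cvg_lim C.
Qed.

Lemma cont_sum (I : Type) (s : seq I) (f : I -> R -> R) (x : R) :
  (forall i, {for x, continuous (f i)}) ->
  {for x, continuous (fun q => \sum_(i <- s) f i q)}.
Proof.
move=> H; elim: s => [|a s IH].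
  have -> : (fun q => \sum_(i <- [::]) f i q) = cst 0.
    by apply/funext => q; rewrite big_nil.
  exact: cst_continuous.
have -> : (fun q => \sum_(i <- a :: s) f i q) = (fun q => f a q + \sum_(i <- s) f i q).
  by apply/funext => q; rewrite big_cons.
exact: (continuousD (H a) IH).
Qed.

Lemma Rint_sum (I : Type) (s : seq I) (f : I -> R -> R) (D : set R) :
  measurable D ->
  (forall i, lebesgue_measure.-integrable D (EFin \o f i)) ->
  Rintegral lebesgue_measure D (fun q => \sum_(i <- s) f i q) =
  \sum_(i <- s) Rintegral lebesgue_measure D (f i).
Proof.
move=> mD H; elim: s => [|a s IH].
  under eq_Rintegral do rewrite big_nil.
  by rewrite big_nil Rintegral_cst // mul0r.
under eq_Rintegral do rewrite big_cons.
rewrite RintegralD //; first by rewrite IH big_cons.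
have -> : (EFin \o (fun q => \sum_(i <- s) f i q)) = (fun q => \sum_(i <- s) (EFin \o f i) q).
  by apply/funext => q /=; rewrite sumEFin.
exact: integrable_sum.
Qed.

End S.

Section S.
Variable R : realType.
Lemma seg_identity r (G : 'rV[R]_r -> 'rV[R]_r) (U : set 'rV[R]_r) (l : 'I_r)
    (y w : 'rV[R]_r) :
  open U ->
  (forall x (h : 'I_r), U x -> derivable G x (delta_mx 0 h)) ->
  (forall x (h : 'I_r), U x -> {for x, continuous (fun x => ('D_(delta_mx 0 h) G x) 0 l)}) ->
  (forall q : R, 0 <= q <= 1 -> U (q *: y + (1 - q) *: w)) ->
  G y 0 l - G w 0 l = \sum_(h < r) (y 0 h - w 0 h) *
      Rintegral lebesgue_measure `[0, 1]
        (fun q => ('D_(delta_mx 0 h) G (q *: y + (1 - q) *: w)) 0 l).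
Proof.
move=> hU dG cP hseg.
set d := y - w.
have aff : forall q : R, q *: y + (1 - q) *: w = w + q *: d.
  by move=> q; rewrite /d scalerBl scale1r scalerBr addrCA.
have Uq : forall q : R, 0 <= q <= 1 -> U (w + q *: d) by move=> q hq; rewrite -aff; exact: hseg.
set P := fun (h : 'I_r) x => ('D_(delta_mx 0 h) G x) 0 l.
set f := fun q : R => \sum_(h < r) d 0 h * P h (w + q *: d).
set phi := fun s : R => G (w + s *: d) 0 l.
have der : forall q : R, 0 <= q <= 1 -> is_derive q 1 phi (f q).
  by move=> q hq; exact: (@line_is_derive2 R r G U l w d q hU (Uq q hq) dG cP).
have contP : forall (h : 'I_r) (q : R), 0 <= q <= 1 -> {for q, continuous (fun q : R => P h (w + q *: d))}.
  move=> h q hq.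
  apply: (@continuous_comp _ _ _ (fun q : R => w + q *: d) (P h) q).
    apply: continuousD; [exact: cst_continuous | exact: scalel_continuous].
  exact: (cP _ h (Uq q hq)).
have contf : {within `[0, 1], continuous f}.
  apply/continuous_in_subspaceT => q; rewrite inE /= in_itv /= => hq.
  apply: cont_sum => h.
  apply: cvgM; [exact: cvg_cst | exact: contP].
have cphi : forall q : R, 0 <= q <= 1 -> {for q, continuous phi}.
  move=> q hq; apply/differentiable_continuous; rewrite -derivable1_diffP.
  by case: (der q hq).
have dLR : derivable_oo_LRcontinuous phi 0 1.
  split.
  - move=> q; rewrite in_itv /= => /andP [q0 q1].
    by case: (der q _) => //; rewrite !ltW.
  - apply: cvg_at_right_filter; apply: cphi; by rewrite lexx ler01.
  - apply: cvg_at_left_filter; apply: cphi; by rewrite lexx ler01.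
have F'f : {in `]0, 1[, derive1 phi =1 f}.
  move=> q; rewrite in_itv /= => /andP [q0 q1].
  rewrite derive1E; apply: (@derive_val _ _ _ _ _ _ _ (der q _)).
  by rewrite !ltW.
have FTC := continuous_FTC2 ltr01 contf dLR F'f.
have Rf : Rintegral lebesgue_measure `[0, 1] f = phi 1 - phi 0.
  by rewrite /Rintegral FTC -EFinB.
have integ : forall (h : 'I_r) (c : R), lebesgue_measure.-integrable `[0, 1]
    (EFin \o (fun q => c * P h (w + q *: d))).
  move=> h c; apply: continuous_compact_integrable; first exact: segment_compact.
  apply/continuous_in_subspaceT => q; rewrite inE /= in_itv /= => hq.
  apply: cvgM; [exact: cvg_cst | exact: contP].
have -> : G y 0 l - G w 0 l = phi 1 - phi 0.
  by rewrite /phi scale1r scale0r addr0 /d addrCA subrr addr0.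
have RS : Rintegral lebesgue_measure `[0, 1] f =
    \sum_(h < r) Rintegral lebesgue_measure `[0, 1] (fun q => d 0 h * P h (w + q *: d)).
  apply: Rint_sum => //; move=> h; exact: integ.
rewrite -Rf RS.
apply: eq_bigr => h _.
have i1 : lebesgue_measure.-integrable `[0, 1] (EFin \o (fun q => P h (w + q *: d))).
  have := integ h 1.
  have -> : (fun q => 1 * P h (w + q *: d)) = (fun q => P h (w + q *: d)).
    by apply/funext => q; rewrite mul1r.
  by [].
have Z := @RintegralZl _ _ _ lebesgue_measure `[0, 1] (fun q => P h (w + q *: d)) (d 0 h) (measurable_itv _) i1.
rewrite /= in Z; rewrite Z.
have -> : d 0 h = y 0 h - w 0 h by rewrite /d !mxE.
apply: f_equal; apply: eq_Rintegral => q _ /=.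
by rewrite /P aff.
Qed.
End S.

Lemma entry_cont (R : realType) r (G : 'rV[R]_r -> 'rV[R]_r) (x : 'rV[R]_r) (h l : 'I_r) :
  {for x, continuous (fun z' => 'D_(delta_mx 0 h) G z')} ->
  {for x, continuous (fun z' => ('D_(delta_mx 0 h) G z') 0 l)}.
Proof.
move=> H.
apply: (@continuous_comp _ _ _ (fun z' => 'D_(delta_mx 0 h) G z') (fun N : 'rV[R]_r => N 0 l) x H).
exact/differentiable_continuous/differentiable_coord.
Qed.

Lemma sum_bound (R : realType) r (dv I : 'I_r -> R) (l : 'I_r) (M : R) :
  dv l = M -> (forall h, `|dv h| <= M) ->
  \sum_(h < r) dv h * I h <= (I l + \sum_(h < r | h != l) `|I h|) * M.
Proof.
move=> dl hd.
rewrite (bigD1 l) //= dl mulrDl [M * _]mulrC lerD2l mulr_suml.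
apply: ler_sum => h _.
apply: le_trans (ler_norm _) _; rewrite normrM mulrC.
by apply: ler_wpM2l => //; exact: normr_ge0.
Qed.

Lemma claimA (R : realType) (n r : nat) (V : set 'rV[R]_r) (hV : open V)
  (g : R -> 'rV[R]_r -> 'rV[R]_r)
  (hg_z : forall (t : R) (h : 'I_r) (z : 'rV[R]_r), V z ->
     derivable (g t) z (delta_mx 0 h) /\
     {for z, continuous (fun z' => 'D_(delta_mx 0 h) (g t) z')})
  (w : 'I_n -> 'I_n -> R -> 'M[R]_(n, r) -> R) (psi : R -> R)
  (hwpsi : forall (t : R) (y : 'M[R]_(n, r)) i j, psi (Sdiam y) <= w i j t y)
  (t : R) (xt vt : 'M[R]_(n, r))
  (hseg : forall (i i' : 'I_n) (q : R),
     0 <= q <= 1 -> V (q *: row i vt + (1 - q) *: row i' vt))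
  (l : 'I_r) (i j : 'I_n) :
  vt i l - vt j l = Sdiam vt ->
  rhs_v g w t xt vt i l - rhs_v g w t xt vt j l <=
    (Kfun g t l (row i vt) (row j vt) - n%:R * psi (Sdiam xt)) * Sdiam vt.
Proof.
move=> hM.
set M := Sdiam vt.
set ps := psi (Sdiam xt).
have hM' : vt i l - vt j l = M by [].
have hab : forall k, vt k l - vt i l <= 0 /\ 0 <= vt k l - vt j l.
  move=> k; have := Sdiam_ge vt k j l; have := Sdiam_ge vt i k l.
  rewrite -/M => /ler_normlP [h1 h2] /ler_normlP [h3 h4]; split; lra.
have sum_b : \sum_(k < n) w i k t xt * (vt k l - vt i l) -
             \sum_(k < n) w j k t xt * (vt k l - vt j l) <= - (n%:R * ps * M).
  rewrite -sumrB.
  apply: le_trans (_ : \sum_(k < n) (- (ps * M)) <= _).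
    apply: ler_sum => k _.
    have [a0 b0] := hab k.
    have p1 := hwpsi t xt i k; have p2 := hwpsi t xt j k.
    rewrite -/ps in p1 p2.
    have : ps * (vt k l - vt i l) - ps * (vt k l - vt j l) = - (ps * M) by rewrite -hM'; ring.
    nra.
  rewrite sumr_const card_ord -(mulr_natr (- (ps * M)) n); rewrite le_eqVlt; apply/orP; left; apply/eqP; ring.
have dG : forall x (h : 'I_r), V x -> derivable (g t) x (delta_mx 0 h).
  by move=> x h Vx; case: (hg_z t h x Vx).
have cP : forall x (h : 'I_r), V x ->
    {for x, continuous (fun x => ('D_(delta_mx 0 h) (g t) x) 0 l)}.
  by move=> x h Vx; apply: entry_cont; case: (hg_z t h x Vx).
have seg := seg_identity hV dG cP (hseg i j).
have gpart : g t (row i vt) 0 l - g t (row j vt) 0 l <=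
    Kfun g t l (row i vt) (row j vt) * M.
  rewrite seg /Kfun /pderiv_g.
  apply: sum_bound; first by rewrite !mxE.
  by move=> h; rewrite !mxE; exact: Sdiam_ge.
rewrite /rhs_v !mxE mulrBl.
lra.
Qed.

Unset Implicit Arguments.

Theorem lemma1 (R : realType) (n r : nat) (hn : (0 < n)%N) (hr : (0 < r)%N)
  (t0 : R)
  (V : set 'rV[R]_r) (hV : open V)
  (g : R -> 'rV[R]_r -> 'rV[R]_r)
  (hg_t : forall z, V z -> continuous (fun t => g t z))
  (hg_z : forall (t : R) (h : 'I_r) (z : 'rV[R]_r), V z ->
     derivable (g t) z (delta_mx 0 h) /\
     {for z, continuous (fun z' => 'D_(delta_mx 0 h) (g t) z')})
  (w : 'I_n -> 'I_n -> R -> 'M[R]_(n, r) -> R)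
  (hw_t : forall i j (y : 'M[R]_(n, r)), continuous (fun t => w i j t y))
  (hw_x : forall i j (t : R) (k : 'I_n) (l : 'I_r) (y : 'M[R]_(n, r)),
     derivable (w i j t) y (delta_mx k l) /\
     {for y, continuous (fun y' => 'D_(delta_mx k l) (w i j t) y')})
  (wbar : R) (psi : R -> R)
  (hpsi0 : forall s, 0 <= s -> 0 <= psi s)
  (hpsi_int : lebesgue_measure.-integrable `[0, +oo[ (EFin \o psi))
  (hpsi_dec : forall a b, 0 <= a -> a <= b -> psi b <= psi a)
  (hwbar : forall (t : R) (y : 'M[R]_(n, r)) i j, t0 <= t -> i != j ->
     w i j t y <= wbar)
  (hwpsi : forall (t : R) (y : 'M[R]_(n, r)) i j, psi (Sdiam y) <= w i j t y)
  (x0 v0 : 'M[R]_(n, r)) (T : \bar R) (x v : R -> 'M[R]_(n, r))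
  (hsol : is_maximal_solution V g w t0 x0 v0 T x v)
  (hseg : forall (t : R) (i i' : 'I_n) (q : R), t0 <= t -> (t%:E < T)%E ->
     0 <= q <= 1 -> V (q *: row i (v t) + (1 - q) *: row i' (v t))) :
  let K : \bar R :=
    ereal_sup [set k | exists (t : R) (i i' : 'I_n) (l : 'I_r),
        [/\ t0 <= t, (t%:E < T)%E &
            k = (Kfun g t l (row i (v t)) (row i' (v t)))%:E]] in
  forall t : R, t0 <= t -> (t%:E < T)%E ->
    (dini_ur (fun s => Sdiam (v s)) t
       <= (K - (n%:R * psi (Sdiam (x t)))%:E) * (Sdiam (v t))%:E)%E.
Proof.
move=> K t ht htT.
case: hsol => hT0 [hx0 hv0 hVsol hd hrs] hmax.
have [_ hrd] := hrs t ht htT.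
have hsegt : forall (i i' : 'I_n) (q : R), 0 <= q <= 1 ->
    V (q *: row i (v t) + (1 - q) *: row i' (v t)).
  by move=> i i' q hq; exact: hseg.
have A := @claimA R n r V hV g hg_z w psi hwpsi t (x t) (v t) hsegt.
have KB : forall l i j, ((Kfun g t l (row i (v t)) (row j (v t)))%:E <= K)%E.
  by move=> l i j; apply: ereal_sup_ubound; exists t, i, j, l; split.
have M0 : 0 <= Sdiam (v t) := Sdiam_ge0 _.
case: (eqVneq (Sdiam (v t)) 0) => [M0'|Mn0].
  rewrite M0' mule0.
  apply: dini_bound hn hr hrd _ => l i j hM.
  by have := A l i j hM; rewrite M0' mulr0.
have Mpos : 0 < Sdiam (v t) by rewrite lt_neqAle eq_sym Mn0.
case EK : K => [k| |].
- apply: le_trans (dini_bound (B := (k - n%:R * psi (Sdiam (x t))) * Sdiam (v t)) hn hr hrd _) _.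
    move=> l i j hM; apply: le_trans (A l i j hM) _.
    apply: ler_wpM2r => //; rewrite lerD2r -lee_fin -EK; exact: KB.
  by rewrite -EFinB -EFinM.
- by rewrite addye // gt0_mulye ?lte_fin // leey.
- have := KB (Ordinal hr) (Ordinal hn) (Ordinal hn); rewrite EK.
  by rewrite leeNy_eq.
Qed.
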